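(* Let $0<b_i\le a_i\le 1$ for $i=1,2$ and let $\mathcal{R}=\mathcal{R}_1\cup\mathcal{R}_2$ with $$\mathcal{R}_1=\left\{(\lambda_1,\lambda_2)\in\mathbb{R}_{\ge0}^2:\ \frac{\lambda_1}{a_1}+\frac{(a_1-b_1)\lambda_2}{a_1 b_2}<1,\ \lambda_2<b_2\right\},\quad \mathcal{R}_2=\left\{(\lambda_1,\lambda_2)\in\mathbb{R}_{\ge0}^2:\ \frac{\lambda_2}{a_2}+\frac{(a_2-b_2)\lambda_1}{a_2 b_1}<1,\ \lambda_1<b_1\right\}.$$ If $$\frac{b_1}{a_1}+\frac{b_2}{a_2}\ge 1,$$ then $\mathcal{R}$ is a convex set; when equality holds, $\mathcal{R}$ is the triangle $\{(\lambda_1,\lambda_2)\in\mathbb{R}_{\ge0}^2:\lambda_1/a_1+\lambda_2/a_2<1\}$ (the time-sharing region).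
   Context: $\mathcal{R}$ is the stability region of the two-user interference channel with bursty traffic, where $a_i$ is the probability that destination $D_i$ decodes the packet of source $S_i$ when only $S_i$ transmits and $b_i$ is the corresponding probability when both sources transmit. *)

(* Defs.v *)
From Stdlib Require Import Reals Lra.
Open Scope R_scope.

Definition region1 (a1 b1 a2 b2 l1 l2 : R) : Prop :=
  0 <= l1 /\ 0 <= l2 /\
  l1 / a1 + (a1 - b1) * l2 / (a1 * b2) < 1 /\ l2 < b2.

Definition region2 (a1 b1 a2 b2 l1 l2 : R) : Prop :=
  0 <= l1 /\ 0 <= l2 /\
  l2 / a2 + (a2 - b2) * l1 / (a2 * b1) < 1 /\ l1 < b1.

Definition stab_region (a1 b1 a2 b2 l1 l2 : R) : Prop :=
  region1 a1 b1 a2 b2 l1 l2 \/ region2 a1 b1 a2 b2 l1 l2.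

Definition convex2 (S : R -> R -> Prop) : Prop :=
  forall x1 x2 y1 y2 t, S x1 x2 -> S y1 y2 -> 0 <= t <= 1 ->
    S (t * x1 + (1 - t) * y1) (t * x2 + (1 - t) * y2).

Definition time_sharing (a1 a2 l1 l2 : R) : Prop :=
  0 <= l1 /\ 0 <= l2 /\ l1 / a1 + l2 / a2 < 1.

(* Main.v *)
Require Import Defs.
From Stdlib Require Import Reals Lra Psatz.
Open Scope R_scope.

Lemma div_lt1 (x p : R) : 0 < p -> (x / p < 1 <-> x < p).
Proof.
  intros Hp. assert (E : x = (x/p)*p) by (field; lra).
  set (q := x/p) in *. split; intro H; nra.
Qed.

Lemma r1_eq (a1 b1 b2 l1 l2 : R) : 0 < a1 -> 0 < b2 ->
  (l1 / a1 + (a1 - b1) * l2 / (a1 * b2) < 1 <-> l1*b2 + (a1-b1)*l2 < a1*b2).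
Proof.
  intros H1 H2.
  replace (l1 / a1 + (a1 - b1) * l2 / (a1 * b2)) with ((l1*b2 + (a1-b1)*l2)/(a1*b2))
    by (field; lra).
  apply div_lt1; nra.
Qed.

Lemma r2_eq (a2 b2 b1 l1 l2 : R) : 0 < a2 -> 0 < b1 ->
  (l2 / a2 + (a2 - b2) * l1 / (a2 * b1) < 1 <-> l2*b1 + (a2-b2)*l1 < a2*b1).
Proof. intros; apply r1_eq; auto. Qed.

Lemma ts_eq (a1 a2 l1 l2 : R) : 0 < a1 -> 0 < a2 ->
  (l1 / a1 + l2 / a2 < 1 <-> l1*a2 + l2*a1 < a1*a2).
Proof.
  intros H1 H2.
  replace (l1 / a1 + l2 / a2) with ((l1*a2 + l2*a1)/(a1*a2)) by (field; lra).
  apply div_lt1; nra.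
Qed.

Definition inter (a1 b1 a2 b2 u v : R) : Prop :=
  0 <= u /\ 0 <= v /\ u*b2 + (a1-b1)*v < a1*b2 /\ v*b1 + (a2-b2)*u < a2*b1.


Lemma lin_conv (p q c x y x' y' t : R) : p*x + q*y < c -> p*x' + q*y' < c -> 0 <= t <= 1 ->
  p*(t*x+(1-t)*x') + q*(t*y+(1-t)*y') < c.
Proof.
  intros H1 H2 Ht.
  replace (p*(t*x+(1-t)*x') + q*(t*y+(1-t)*y')) with
    (t*(p*x+q*y) + (1-t)*(p*x'+q*y')) by ring.
  destruct (Req_dec t 0) as [->|Hn]; [lra|]. nra.
Qed.

Theorem mainTheorem5 (a1 b1 a2 b2 : R)
  (hb1 : 0 < b1) (hba1 : b1 <= a1) (ha1 : a1 <= 1)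
  (hb2 : 0 < b2) (hba2 : b2 <= a2) (ha2 : a2 <= 1) :
  (b1 / a1 + b2 / a2 >= 1 -> convex2 (stab_region a1 b1 a2 b2)) /\
  (b1 / a1 + b2 / a2 = 1 ->
     forall l1 l2, stab_region a1 b1 a2 b2 l1 l2 <-> time_sharing a1 a2 l1 l2).
Proof.
  assert (Ha1 : 0 < a1) by lra. assert (Ha2 : 0 < a2) by lra.
  assert (Hc : b1 / a1 + b2 / a2 = (b1*a2 + b2*a1)/(a1*a2)) by (field; lra).
  assert (Hcond : b1 / a1 + b2 / a2 >= 1 -> b1*a2 + b2*a1 >= a1*a2).
  { intro H. rewrite Hc in H. destruct (Rlt_dec (b1*a2 + b2*a1) (a1*a2)) as [Hl|]; [|lra].
    apply (div_lt1 _ (a1*a2)) in Hl; [lra|nra]. }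
  assert (Key : b1*a2 + b2*a1 >= a1*a2 -> forall u v,
     stab_region a1 b1 a2 b2 u v <-> inter a1 b1 a2 b2 u v).
  { intros H u v. unfold stab_region, region1, region2, inter.
    rewrite (r1_eq a1 b1 b2 u v) by lra. rewrite (r2_eq a2 b2 b1 u v) by lra.
    split.
    - intros [[Hu [Hv [L1 Hvb]]]|[Hu [Hv [L2 Hub]]]].
      + repeat split; auto.
        assert (E : b2*(v*b1 + (a2-b2)*u) - b2*(a2*b1) =
                (a2-b2)*(u*b2 + (a1-b1)*v - a1*b2) + (a2*b1+a1*b2-a1*a2)*(v-b2)) by ring.
        destruct (Req_dec a2 b2) as [Heq|Hne].
        * subst a2. nra.
        * assert (a2 - b2 > 0) by lra. nra.
      + repeat split; auto.
        assert (E : b1*(u*b2 + (a1-b1)*v) - b1*(a1*b2) =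
                (a1-b1)*(v*b1 + (a2-b2)*u - a2*b1) + (a2*b1+a1*b2-a1*a2)*(u-b1)) by ring.
        destruct (Req_dec a1 b1) as [Heq|Hne].
        * subst a1. nra.
        * assert (a1 - b1 > 0) by lra. nra.
    - intros [Hu [Hv [L1 L2]]].
      destruct (Rlt_dec v b2) as [Hvb|Hvb].
      + left; repeat split; auto.
      + right; repeat split; auto. nra. }
  split.
  - intros H x1 x2 y1 y2 t Hx Hy Ht. apply Hcond in H.
    apply Key in Hx; auto. apply Key in Hy; auto. apply Key; auto.
    destruct Hx as [Hx1 [Hx2 [Lx1 Lx2]]]. destruct Hy as [Hy1 [Hy2 [Ly1 Ly2]]].
    unfold inter. repeat split.
    + nra.
    + nra.
    + replace ((t * x1 + (1 - t) * y1) * b2 + (a1 - b1) * (t * x2 + (1 - t) * y2))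
        with (b2*(t * x1 + (1 - t) * y1) + (a1 - b1) * (t * x2 + (1 - t) * y2)) by ring.
      apply lin_conv; auto; lra.
    + replace ((t * x2 + (1 - t) * y2) * b1 + (a2 - b2) * (t * x1 + (1 - t) * y1))
        with ((a2 - b2)*(t * x1 + (1 - t) * y1) + b1 * (t * x2 + (1 - t) * y2)) by ring.
      apply lin_conv; auto; lra.
  - intros H l1 l2.
    assert (He : b1*a2 + b2*a1 = a1*a2).
    { rewrite Hc in H. assert (Hp : a1*a2 > 0) by nra.
      apply (f_equal (fun z => z * (a1*a2))) in H.
      replace ((b1 * a2 + b2 * a1) / (a1 * a2) * (a1 * a2)) with (b1*a2+b2*a1) in H
        by (field; lra). lra. }
    rewrite Key by lra. unfold inter, time_sharing. rewrite ts_eq by lra.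
    assert (E1 : a2*(l1*b2 + (a1-b1)*l2) - a1*a2*b2 = b2*(l1*a2 + l2*a1 - a1*a2)
              + l2*(a1*a2 - a2*b1 - a1*b2)) by ring.
    assert (E2 : a1*(l2*b1 + (a2-b2)*l1) - a1*a2*b1 = b1*(l1*a2 + l2*a1 - a1*a2)
              + l1*(a1*a2 - a2*b1 - a1*b2)) by ring.
    split.
    + intros [Hu [Hv [L1 L2]]]. repeat split; auto. nra.
    + intros [Hu [Hv L]]. repeat split; auto; nra.
Qed.
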